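(* Let $N$ be a positive integer and $G = \mathbb{Z}/N\mathbb{Z}$. Then for $1 \leq r \leq N$, \[\rho_G^-(r) = \min_{d \in D(N)} d \left( 2\left\lceil\frac{r}{d}\right\rceil - 1\right),\] where $D(N)$ denotes the set of positive divisors of $N$.
   Context: For a finite abelian group $(G,+)$ of order $N$ and subsets $A, B \subseteq G$, write $A - B = \{a - b \mid a \in A, b \in B\}$. For $1 \le r \le N$ define $\rho^-_G(r) = \min \{|A - A| \mid A \subseteq G, |A| = r\}$. *)

(* Defs.v *)
From mathcomp Require Import all_boot all_order all_algebra.
Set Implicit Arguments. Unset Strict Implicit. Unset Printing Implicit Defensive.
Import GRing.Theory.

Definition diffset (G : finZmodType) (A B : {set G}) : {set G} :=
  [set (a - b)%R | a in A, b in B].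

(* rho^-_G(r) = min { |A - A| : A subset of G, |A| = r }.
   The default value #|G| of the fold is irrelevant for 1 <= r <= #|G|
   (the index set is nonempty and every |A - A| <= #|G|). *)
Definition rho_minus (G : finZmodType) (r : nat) : nat :=
  \big[minn/#|G|]_(A : {set G} | #|A| == r) #|diffset A A|.

Definition ceil_div (r d : nat) : nat := (r + d.-1) %/ d.

(* Main.v *)
Require Import Defs.
From mathcomp Require Import all_boot all_order all_algebra.
From mathcomp Require Import zify.
Set Implicit Arguments. Unset Strict Implicit. Unset Printing Implicit Defensive.
Import GRing.Theory.

Lemma prod_hint m P a : m <= P -> m <= a -> m * P + m * a <= P * a + m * m.
Proof.
move=> /subnK <- /subnK <-.
set x := P - m; set z := a - m.
rewrite !mulnDl !mulnDr; rewrite [x * m]mulnC; lia.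
Qed.

Lemma key_ineq m P a b : 0 < m -> m <= P -> m <= a -> P * a <= m * (P + b - m - 1) -> a < b.
Proof.
move=> m0 mP ma H.
rewrite ltnNge; apply/negP => ba.
have H2 : P * a <= m * (P + a - m - 1).
  apply: leq_trans H _; rewrite leq_mul2l; apply/orP; right; lia.
have e : (P + a - m - 1) + m + 1 = P + a by lia.
have e2 := congr1 (muln m) e; rewrite !mulnDr muln1 in e2.
have := @prod_hint m P a mP ma.
lia.
Qed.

Lemma arith (m P Q h1 h2 X1 X2 : nat) :
  0 < m -> m <= P -> P <= h2 -> Q + m <= h1 -> (Q = 0 \/ m <= Q) ->
  P * (h1 - Q) <= m * X1 -> Q * (h2 - P) <= m * X2 ->
  X1 + m < h2 -> X2 + m < h1 -> h1 < h2.
Proof.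
move=> m0 mP Ph2 Qh1 [Q0|mQ] D1 D2 E1 E2.
- subst Q; rewrite subn0 in D1.
  have : m * h1 <= m * X1 by apply: leq_trans D1; rewrite leq_mul2r mP orbT.
  rewrite leq_mul2l; case/orP => [/eqP|]; lia.
- exfalso.
  have k3 : h1 - Q < h2 - P.
    apply: (@key_ineq m P (h1 - Q) (h2 - P) m0 mP); first lia.
    apply: (leq_trans D1); rewrite leq_mul2l; apply/orP; right; lia.
  have k4 : h2 - P < h1 - Q.
    apply: (@key_ineq m Q (h2 - P) (h1 - Q) m0 mQ); first lia.
    apply: (leq_trans D2); rewrite leq_mul2l; apply/orP; right; lia.
  lia.
Qed.
Section Stab.
Variable G : finZmodType.
Implicit Types (A B C X Y : {set G}) (g h x y : G).

Definition stab C : {set G} := locked [set g : G | [forall x in C, (x + g)%R \in C]].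

Lemma stabP C g x : g \in stab C -> x \in C -> (x + g)%R \in C.
Proof. by rewrite /stab -lock inE => /forall_inP; apply. Qed.

Lemma stab0 C : 0%R \in stab C.
Proof. by rewrite /stab -lock inE; apply/forall_inP => x; rewrite addr0. Qed.

Lemma stabD C g h : g \in stab C -> h \in stab C -> (g + h)%R \in stab C.
Proof.
move=> Hg Hh; rewrite /stab -lock inE; apply/forall_inP => x xC.
by rewrite addrA; apply: stabP Hh _; apply: stabP Hg _.
Qed.

Lemma stab_transl C g : g \in stab C -> [set (x + g)%R | x in C] = C.
Proof.
move=> Hg; apply/eqP; rewrite eqEcard card_imset; last exact: addIr.
rewrite leqnn andbT; apply/subsetP => _ /imsetP[x xC ->]; exact: stabP Hg xC.
Qed.

Lemma stabBmem C g x : g \in stab C -> x \in C -> (x - g)%R \in C.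
Proof.
move=> Hg xC; move: xC; rewrite -{1}(stab_transl Hg) => /imsetP[z zC ->].
by rewrite addrK.
Qed.

Lemma stabN C g : g \in stab C -> (- g)%R \in stab C.
Proof. move=> Hg; rewrite /stab -lock inE; apply/forall_inP => x xC; exact: stabBmem. Qed.

Lemma stabB C g h : g \in stab C -> h \in stab C -> (g - h)%R \in stab C.
Proof. by move=> Hg Hh; apply: stabD Hg (stabN Hh). Qed.

Lemma stab_iff C g x : g \in stab C -> ((x + g)%R \in C) = (x \in C).
Proof.
move=> Hg; apply/idP/idP => [H|]; last exact: stabP.
by rewrite -(addrK g x); apply: stabBmem.
Qed.

Lemma fiber_bound (H1 H2 U V : {set G}) y z :
  (forall u u', u \in U -> u' \in U -> (u - u')%R \in H1) ->
  (forall v v', v \in V -> v' \in V -> (v - v')%R \in H2) ->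
  #|[set p in setX U V | (y + p.1 + p.2)%R == z]| <= #|H1 :&: H2|.
Proof.
move=> hU hV.
set F := [set p in _ | _].
have [->|[p0 p0F]] := set_0Vmem F; first by rewrite cards0.
move: (p0F); rewrite inE => /andP[]; rewrite inE => /andP[p01 p02] /eqP p0z.
have inj : {in F &, injective (fun p : G * G => (p.1 - p0.1)%R)}.
  move=> [a b] [c d]; rewrite !inE /= => /andP[_ /eqP abz] /andP[_ /eqP cdz] /addIr ac.
  subst c; congr pair; apply: (@addrI _ (y + a)%R); by rewrite abz cdz.
rewrite -(card_in_imset inj); apply: subset_leq_card; apply/subsetP => _ /imsetP[[a b] pF ->].
move: pF; rewrite !inE /= => /andP[/andP[aU bV] /eqP abz].
rewrite hU //=.
have -> : (a - p0.1 = p0.2 - b)%R.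
  have e : (a + b = p0.1 + p0.2)%R.
    by apply: (@addrI _ y); rewrite !addrA abz p0z.
  by apply/eqP; rewrite subr_eq addrAC (addrC p0.2) -e addrK.
exact: hV.
Qed.

Lemma double_count (H1 H2 U V Z : {set G}) y :
  (forall u u', u \in U -> u' \in U -> (u - u')%R \in H1) ->
  (forall v v', v \in V -> v' \in V -> (v - v')%R \in H2) ->
  (forall u v, u \in U -> v \in V -> (y + u + v)%R \in Z) ->
  #|U| * #|V| <= #|H1 :&: H2| * #|Z|.
Proof.
move=> hU hV hZ.
rewrite -cardsX -sum1_card.
rewrite (partition_big (fun p : G * G => (y + p.1 + p.2)%R) (mem Z)); last first.
  by move=> [a b]; rewrite inE /= => /andP[aU bV]; exact: hZ.
rewrite mulnC -sum_nat_const; apply: leq_sum => z zZ.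
rewrite sum1dep_card.
apply: leq_trans (fiber_bound y z hU hV).
by apply: subset_leq_card; apply/subsetP => p; rewrite !inE.
Qed.
Lemma stab_intro C g : (forall x, x \in C -> (x + g)%R \in C) -> g \in stab C.
Proof. by move=> H; rewrite /stab -lock inE; apply/forall_inP. Qed.

End Stab.


Section U.
Variable G : finZmodType.
Implicit Types (C : {set G}).

Lemma subV C1 C2 (y : G) : y \in C1 -> y \notin C2 ->
  #|C1 :\: C2| + #|stab C1 :&: stab C2| < #|stab C2| ->
  #|C2 :\: C1| + #|stab C1 :&: stab C2| < #|stab C1| ->
  #|stab C1| < #|stab C2|.
Proof.
move=> yC1 yC2 E1 E2.
set H1 := stab C1 in E1 E2 *; set H2 := stab C2 in E1 E2 *; set M := H1 :&: H2 in E1 E2 *.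
set P := [set h in H2 | (y + h)%R \in C1].
set Q := [set h in H1 | (y + h)%R \in C2].
have MP : M \subset P.
  apply/subsetP => h; rewrite !inE => /andP[h1 h2]; rewrite h2 /=; exact: stabP h1 yC1.
have PH2 : P \subset H2 by apply/subsetP => h; rewrite inE => /andP[].
have QH1 : Q \subset H1 by apply/subsetP => h; rewrite inE => /andP[].
have QM : [disjoint Q & M].
  rewrite -setI_eq0; apply/eqP/setP => h; rewrite !inE.
  apply/negP => /andP[/andP[_ yh] /andP[_ h2]].
  by rewrite (stab_iff _ h2) (negbTE yC2) in yh.
have cQ : #|Q| + #|M| <= #|H1|.
  have := cardsUI Q M; move: QM; rewrite -setI_eq0 => /eqP ->; rewrite cards0 addn0 => <-.
  by apply: subset_leq_card; rewrite subUset QH1 subsetIl.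
have m0 : 0 < #|M| by apply/card_gt0P; exists 0%R; rewrite inE !stab0.
have Q0 : Q = set0 \/ #|M| <= #|Q|.
  have [->|[q qQ]] := set_0Vmem Q; [by left|right].
  move: (qQ); rewrite inE => /andP[q1 q2].
  rewrite -(card_imset _ (addrI q)); apply: subset_leq_card.
  apply/subsetP => _ /imsetP[h hM ->]; move: hM; rewrite inE => /andP[h1 h2].
  rewrite inE (stabD q1 h1) /= addrA; exact: stabP h2 q2.
have sub1 : forall u u', u \in H1 -> u' \in H1 -> (u - u')%R \in H1 by move=> *; exact: stabB.
have sub2 : forall u u', u \in H2 -> u' \in H2 -> (u - u')%R \in H2 by move=> *; exact: stabB.
have D1 : #|P| * #|H1 :\: Q| <= #|M| * #|C1 :\: C2|.
  rewrite /M setIC; apply: (@double_count _ H2 H1 P (H1 :\: Q) _ y).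
  - by move=> u u' /(subsetP PH2) ? /(subsetP PH2) ?; exact: sub2.
  - by move=> u u'; rewrite !inE => /andP[_ ?] /andP[_ ?]; exact: sub1.
  - move=> u v; rewrite !inE => /andP[u2 yu] /andP[vQ v1].
    rewrite (stabP v1 yu) andbT -addrA (addrC u) addrA (stab_iff _ u2).
    by move: vQ; rewrite v1.
have D2 : #|Q| * #|H2 :\: P| <= #|M| * #|C2 :\: C1|.
  apply: (@double_count _ H1 H2 Q (H2 :\: P) _ y).
  - by move=> u u' /(subsetP QH1) ? /(subsetP QH1) ?; exact: sub1.
  - by move=> u u'; rewrite !inE => /andP[_ ?] /andP[_ ?]; exact: sub2.
  - move=> u v; rewrite !inE => /andP[u1 yu] /andP[vP v2].
    rewrite (stabP v2 yu) andbT -addrA (addrC u) addrA (stab_iff _ u1).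
    by move: vP; rewrite v2.
rewrite cardsD (setIidPr QH1) in D1.
rewrite cardsD (setIidPr PH2) in D2.
apply: (@arith #|M| #|P| #|Q| _ _ _ _ m0 (subset_leq_card MP) (subset_leq_card PH2) cQ _ D1 D2 E1 E2).
by case: Q0 => [->|]; [left; rewrite cards0|right].
Qed.

Definition kappa C := #|C| + #|stab C|.

Lemma stab_union_sub C1 C2 : stab C1 :&: stab C2 \subset stab (C1 :|: C2).
Proof.
apply/subsetP => g; rewrite !inE => /andP[h1 h2]; apply: stab_intro => x.
by rewrite !inE => /orP[xa|xb]; [rewrite (stabP h1 xa)|rewrite (stabP h2 xb) orbT].
Qed.

Lemma kappaU C1 C2 : C1 != set0 -> C2 != set0 ->
  minn (kappa C1) (kappa C2) <= kappa (C1 :|: C2).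
Proof.
move=> n1 n2; rewrite /kappa.
case: (C1 =P C1 :|: C2) => [e|ne1].
  by rewrite -e geq_minl.
case: (C2 =P C1 :|: C2) => [e|ne2].
  by rewrite -e geq_minr.
rewrite leqNgt; apply/negP; rewrite leq_min => /andP[L1 L2].
have [y yC1 yC2] : exists2 y, y \in C1 & y \notin C2.
  apply/exists_inP; rewrite -(negbK [exists _ in _, _]) negb_exists_in.
  apply/negP => /forall_inP H; apply: ne2; apply/setP => z; rewrite inE.
  by case: (boolP (z \in C1)) => // zC1; rewrite (negbNE (H z zC1)).
have [x xC2 xC1] : exists2 x, x \in C2 & x \notin C1.
  apply/exists_inP; rewrite -(negbK [exists _ in _, _]) negb_exists_in.
  apply/negP => /forall_inP H; apply: ne1; apply/setP => z; rewrite inE.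
  by case: (boolP (z \in C2)) => zC2; [rewrite (negbNE (H z zC2)) | rewrite orbF].
have hM := subset_leq_card (stab_union_sub C1 C2).
have c1 := cardsUI C1 C2; have c2 := cardsID C2 C1; have c3 := cardsID C1 C2.
rewrite (setIC C2 C1) in c3.
have A1 : #|C1 :\: C2| + #|stab C1 :&: stab C2| < #|stab C2| by lia.
have A2 : #|C2 :\: C1| + #|stab C1 :&: stab C2| < #|stab C1| by lia.
have := subV yC1 yC2 A1 A2.
rewrite setIC in A1 A2.
have := subV xC2 xC1 A2 A1.
lia.
Qed.
End U.


Section Kn.
Variable G : finZmodType.
Implicit Types (A B C X Y : {set G}).

Definition sumset A B : {set G} := [set (a + b)%R | a in A, b in B].

Definition Ae A B (e : G) := A :|: [set (b + e)%R | b in B].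
Definition Be A B (e : G) := B :&: [set (a - e)%R | a in A].

Lemma etrans_card A B e : #|A| + #|B| <= #|Ae A B e| + #|Be A B e|.
Proof.
rewrite /Ae.
have c1 := cardsUI A [set (b + e)%R | b in B].
rewrite card_imset in c1; last exact: addIr.
suff : #|A :&: [set (b + e)%R | b in B]| <= #|Be A B e|.
  by move=> h; rewrite -c1 leq_add2l.
rewrite -(card_imset _ (addIr (- e)%R)); apply: subset_leq_card.
apply/subsetP => _ /imsetP[x xI ->]; move: xI; rewrite inE => /andP[xA /imsetP[b bB xe]].
rewrite /Be inE xe addrK bB /=; apply/imsetP; exists (b + e)%R => //.
  by rewrite -xe. by rewrite addrK.
Qed.

Lemma etrans_sub A B e : sumset (Ae A B e) (Be A B e) \subset sumset A B.
Proof.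
apply/subsetP => _ /imset2P[x y xI yI ->]; move: xI yI.
rewrite /Ae /Be !inE => /orP[xA|/imsetP[b bB ->]] /andP[yB /imsetP[a aA ye]].
  by apply/imset2P; exists x y.
apply/imset2P; exists a b => //; rewrite ye.
by rewrite -addrA [(e + _)%R]addrC subrK addrC.
Qed.

Lemma kneser_aux n A B : #|sumset A B| + #|B| <= n -> A != set0 -> B != set0 ->
  #|A| + #|B| <= kappa (sumset A B).
Proof.
elim: n A B => [|n IH] A B hn nA nB.
  by move: nB; rewrite -card_gt0; lia.
set C := sumset A B.
case: (boolP [forall b in B, exists a in A, Be A B (a - b)%R != B]) => [Hall|Hnot].
- set E := [set e | (Be A B e != set0) && (Be A B e != B)].
  have cover : C = \bigcup_(e in E) sumset (Ae A B e) (Be A B e).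
    apply/eqP; rewrite eqEsubset; apply/andP; split; last first.
      by apply/bigcupsP => e _; exact: etrans_sub.
    apply/subsetP => _ /imset2P[a b aA bB ->].
    move/forall_inP: Hall => /(_ b bB) /exists_inP[a' a'A hne].
    have bBe : b \in Be A B (a' - b)%R.
      by rewrite /Be inE bB /=; apply/imsetP; exists a' => //; rewrite opprB addrC subrK.
    apply/bigcupP; exists (a' - b)%R.
      by rewrite inE hne andbT; apply/set0Pn; exists b.
    apply/imset2P; exists a b => //; by rewrite /Ae inE aA.
  have PX : ((\bigcup_(e in E) sumset (Ae A B e) (Be A B e)) == set0)
             || (#|A| + #|B| <= kappa (\bigcup_(e in E) sumset (Ae A B e) (Be A B e))).
    apply: (big_ind (fun X => (X == set0) || (#|A| + #|B| <= kappa X))).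
    - by rewrite eqxx.
    - move=> X Y hX hY.
      case: (boolP (X == set0)) => [/eqP ->|nX]; first by rewrite set0U.
      case: (boolP (Y == set0)) => [/eqP ->|nY]; first by rewrite setU0.
      move: hX hY; rewrite (negbTE nX) (negbTE nY) /= => hX hY.
      apply/orP; right; apply: leq_trans (kappaU nX nY); by rewrite leq_min hX hY.
    - move=> e; rewrite inE => /andP[ne1 ne2]; apply/orP; right.
      apply: leq_trans (etrans_card A B e) _.
      apply: IH.
      + have h1 := subset_leq_card (etrans_sub A B e).
        have h2 : #|Be A B e| < #|B|.
          rewrite ltnNge; apply/negP => h; apply/negP: ne2; rewrite negbK eqEcard h andbT.
          by apply/subsetP => x; rewrite inE => /andP[].
        lia.
      + apply/set0Pn; case/set0Pn: nA => a aA; exists a; by rewrite /Ae inE aA.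
      + exact: ne1.
  rewrite -cover in PX; case/orP: PX => // /eqP C0.
  case/set0Pn: nA => a aA; case/set0Pn: nB => b bB.
  have : (a + b)%R \in C by apply/imset2P; exists a b.
  by rewrite C0 inE.
- rewrite negb_forall_in in Hnot; case/exists_inP: Hnot => b bB.
  rewrite negb_exists_in => /forall_inP Hb.
  have hA : #|A| <= #|C|.
    rewrite -(card_imset _ (addIr b)); apply: subset_leq_card; apply/subsetP => _ /imsetP[a aA ->].
    by apply/imset2P; exists a b.
  have hB : #|B| <= #|stab C|.
    rewrite -(card_imset _ (addIr (- b)%R)); apply: subset_leq_card; apply/subsetP => _ /imsetP[b' b'B ->].
    apply: stab_intro => _ /imset2P[a b'' aA b''B ->].
    have := Hb a aA; rewrite negbK => /eqP eB.
    move: b'B; rewrite -eB /Be inE => /andP[_ /imsetP[a0 a0A e0]].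
    apply/imset2P; exists a0 b'' => //.
    rewrite e0 opprB addrAC addrA.
    by rewrite addrCA [(a + _)%R]addrC subrK addrK.
  rewrite /kappa; lia.
Qed.

Theorem kneser_weak A B : A != set0 -> B != set0 -> #|A| + #|B| <= kappa (sumset A B).
Proof. exact: (@kneser_aux _ A B (leqnn _)). Qed.
End Kn.


Lemma ceil_le r d q : 0 < d -> r <= d * q -> ceil_div r d <= q.
Proof.
move=> d0 h; rewrite /ceil_div.
have -> : q = (q * d + d.-1) %/ d.
  by rewrite divnMDl // divn_small ?addn0 //; lia.
apply: leq_div2r; lia.
Qed.

Section Lb.
Variable G : finZmodType.
Implicit Types (A B C X Y : {set G}).

Lemma periodic_dvd S X : (forall x h, x \in X -> h \in stab S -> (x + h)%R \in X) ->
  #|stab S| %| #|X|.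
Proof.
move: {2}#|X| (leqnn #|X|) => n; elim: n X => [|n IH] X hn hX.
  by move: hn; rewrite leqn0 => /eqP ->; rewrite dvdn0.
have [->|[x xX]] := set_0Vmem X; first by rewrite cards0 dvdn0.
set Y := [set (x + h)%R | h in stab S].
have YX : Y \subset X by apply/subsetP => _ /imsetP[h hH ->]; exact: hX.
have cY : #|Y| = #|stab S| by rewrite card_imset //; exact: addrI.
have cX : #|X| = #|X :\: Y| + #|Y| by rewrite cardsD (setIidPr YX) subnK // subset_leq_card.
rewrite cX cY dvdn_add ?dvdnn //; apply: IH.
  have : 0 < #|Y| by apply/card_gt0P; exists x; apply/imsetP; exists 0%R; rewrite ?stab0 ?addr0.
  lia.
move=> z h; rewrite inE => /andP[zY zX] hH; rewrite inE (hX _ _ zX hH) andbT.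
apply/negP => /imsetP[h' h'H e]; move/negP: zY; apply; apply/imsetP; exists (h' - h)%R.
  exact: stabB.
by rewrite addrA -e addrK.
Qed.

Lemma lower_bound A r : #|A| = r -> 0 < r ->
  exists2 d, d %| #|G| & d * (2 * ceil_div r d - 1) <= #|diffset A A|.
Proof.
move=> cA r0.
set C := diffset A A; set H := stab C.
set nA := [set (- a)%R | a in A].
set A2 := sumset A H; set B2 := sumset nA H.
have CH : forall x h, x \in C -> h \in H -> (x + h)%R \in C by move=> x h xC hH; exact: stabP hH xC.
have e2 : sumset A2 B2 = C.
  apply/eqP; rewrite eqEsubset; apply/andP; split; apply/subsetP.
    move=> _ /imset2P[x y /imset2P[a h aA hH ->] /imset2P[b h' /imsetP[a' a'A ->] h'H ->] ->].
    have -> : (a + h + (- a' + h') = (a - a') + (h + h'))%R.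
      by rewrite addrACA.
    apply: CH; [by apply/imset2P; exists a a'|exact: stabD].
  move=> _ /imset2P[a a' aA a'A ->]; apply/imset2P; exists (a + 0)%R (- a' + 0)%R.
  - by apply/imset2P; exists a 0%R; rewrite ?stab0.
  - by apply/imset2P; exists (- a')%R 0%R; rewrite ?stab0 //; apply/imsetP; exists a'.
  - by rewrite !addr0.
have nA2 : A2 != set0.
  apply/set0Pn; have : 0 < #|A| by rewrite cA. case/card_gt0P => a aA.
  by exists (a + 0)%R; apply/imset2P; exists a 0%R; rewrite ?stab0.
have nB2 : B2 != set0.
  apply/set0Pn; have : 0 < #|A| by rewrite cA. case/card_gt0P => a aA.
  by exists (- a + 0)%R; apply/imset2P; exists (- a)%R 0%R; rewrite ?stab0 //; apply/imsetP; exists a.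
have K := kneser_weak nA2 nB2; rewrite e2 /kappa -/H in K.
have per : forall Z, (forall x h, x \in sumset Z H -> h \in H -> (x + h)%R \in sumset Z H).
  move=> Z _ h /imset2P[z h' zZ h'H ->] hH; apply/imset2P; exists z (h' + h)%R => //.
    exact: stabD. by rewrite addrA.
have d0 : 0 < #|H| by apply/card_gt0P; exists 0%R; exact: stab0.
have cA2 : r <= #|A2|.
  rewrite -cA -(card_imset _ (addIr 0%R)); apply: subset_leq_card; apply/subsetP.
  by move=> _ /imsetP[a aA ->]; apply/imset2P; exists a 0%R; rewrite ?stab0.
have cB2 : r <= #|B2|.
  rewrite -cA -(card_imset _ oppr_inj) -(card_imset _ (addIr 0%R)); apply: subset_leq_card; apply/subsetP.
  move=> _ /imsetP[_ /imsetP[a aA ->] ->]; apply/imset2P; exists (- a)%R 0%R; rewrite ?stab0 //.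
  by apply/imsetP; exists a.
have dA : #|H| %| #|A2| by apply: periodic_dvd; exact: per.
have dB : #|H| %| #|B2| by apply: periodic_dvd; exact: per.
have qA : r <= #|H| * (#|A2| %/ #|H|) by rewrite mulnC divnK.
have qB : r <= #|H| * (#|B2| %/ #|H|) by rewrite mulnC divnK.
have hA : #|H| * ceil_div r #|H| <= #|A2|.
  apply: (@leq_trans (#|H| * (#|A2| %/ #|H|))); last by rewrite mulnC divnK.
  by rewrite leq_mul2l (ceil_le d0 qA) orbT.
have hB : #|H| * ceil_div r #|H| <= #|B2|.
  apply: (@leq_trans (#|H| * (#|B2| %/ #|H|))); last by rewrite mulnC divnK.
  by rewrite leq_mul2l (ceil_le d0 qB) orbT.
exists #|H|.
  by rewrite -cardsT; apply: periodic_dvd => x h _ _; rewrite inE.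
rewrite mulnBr muln1 mulnA (mulnC _ 2) -mulnA; lia.
Qed.
End Lb.


Lemma ceil_ge r d : 0 < d -> r <= d * ceil_div r d.
Proof.
move=> d0; rewrite /ceil_div.
have := divn_eq (r + d.-1) d; have := ltn_pmod (r + d.-1) d0.
move: ((r + d.-1) %/ d) ((r + d.-1) %% d) => q s hs e.
rewrite mulnC; lia.
Qed.

Lemma e3_arith X1 X2 X3 X4 N ix iy k : X1 + X2 + X4 = X3 + N -> iy < k -> k <= N ->
  X4 + (X1 + (ix + (k-1) - iy) + (N - (k-1)) + (X2 + iy)) = N + (X3 + ix) + N.
Proof. lia. Qed.

Lemma jlt_arith ix iy k : ix < k -> iy < k -> ix + (k - 1) - iy < 2 * k - 1.
Proof. lia. Qed.

Lemma val_addZp n (x y : 'I_n.+1) : val (x + y)%R = (val x + val y) %% n.+1.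
Proof. by []. Qed.

Lemma upper_bound n r d : 0 < r -> r <= n.+1 -> d %| n.+1 ->
  exists A : {set 'I_n.+1}, #|A| = r /\ #|diffset A A| <= d * (2 * ceil_div r d - 1).
Proof.
move=> r0 rN dN.
set N := n.+1.
have d0 : 0 < d by apply: dvdn_gt0 dN.
set m := N %/ d.
have Nm : m * d = N by rewrite divnK.
set k := ceil_div r d.
have k0 : 0 < k.
  have := ceil_ge r d0; rewrite -/k; case: k => //; lia.
have km : k <= m by rewrite /k; apply: ceil_le d0 _; rewrite mulnC Nm.
have rk := ceil_ge r d0; rewrite -/k in rk.
pose gv (t : nat) := (t %/ k) * m + t %% k.
have gvN : forall t, t < r -> gv t < N.
  move=> t tr; rewrite /gv.
  have : t %/ k < d by rewrite ltn_divLR //; lia.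
  have := ltn_pmod t k0.
  move: (t %/ k) (t %% k) => q s hs hq.
  have : (q + 1) * m <= d * m by rewrite leq_mul2r; lia.
  rewrite mulnDl mul1n; lia.
have gvdiv : forall t, (gv t) %/ m = t %/ k /\ (gv t) %% m = t %% k.
  move=> t; have m0 : 0 < m by lia.
  have hs : t %% k < m := leq_trans (ltn_pmod t k0) km.
  by rewrite /gv divnMDl // modnMDl (divn_small hs) addn0 modn_small.
pose g (t : 'I_r) : 'I_n.+1 := inZp (gv t).
have gval : forall t : 'I_r, val (g t) = gv t by move=> t; rewrite /= modn_small // gvN.
set A := [set g t | t in 'I_r].
exists A; split.
  rewrite card_imset ?card_ord // => t1 t2 e.
  have := congr1 val e; rewrite !gval => e'.
  have [a1 b1] := gvdiv t1; have [a2 b2] := gvdiv t2.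
  apply: val_inj; rewrite /= (divn_eq t1 k) (divn_eq t2 k).
  by rewrite -a1 -b1 -a2 -b2 e'.
pose F (p : 'I_d * 'I_(2 * k - 1)) : 'I_n.+1 := inZp (p.1 * m + p.2 + (N - (k - 1))).
apply: (@leq_trans #|[set F p | p in [set: 'I_d * 'I_(2 * k - 1)]]|); last first.
  by apply: leq_trans (leq_imset_card _ _) _; rewrite cardsT card_prod !card_ord.
apply: subset_leq_card; apply/subsetP => _ /imset2P[x y /imsetP[t1 _ ->] /imsetP[t2 _ ->] ->].
set qx := t1 %/ k; set ix := t1 %% k; set qy := t2 %/ k; set iy := t2 %% k.
have ixk : ix < k by apply: ltn_pmod.
have iyk : iy < k by apply: ltn_pmod.
have qlt : (qx + d - qy) %% d < d by apply: ltn_pmod.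
have jlt : ix + (k - 1) - iy < 2 * k - 1 by exact: jlt_arith.
apply/imsetP; exists (Ordinal qlt, Ordinal jlt); first by rewrite inE.
apply/eqP; rewrite subr_eq; apply/eqP; apply: val_inj.
rewrite val_addZp !gval /=.
have t2r : t2 < r by [].
have t1r : t1 < r by [].
have hx := gvN _ t1r; have hy := gvN _ t2r.
rewrite /gv -/qx -/ix -/qy -/iy in hx hy *.
rewrite modnDml.
have := divn_eq (qx + d - qy) d.
move: ((qx + d - qy) %/ d) ((qx + d - qy) %% d) qlt => c q qd e.
have e2 : q * m + qy * m + c * N = qx * m + N.
  have : qy <= d.
    have : t2 %/ k < d by rewrite ltn_divLR //; lia.
    rewrite -/qy; lia.
  move=> qyd.
  have e' : q + qy + c * d = qx + d by lia.
  have := congr1 (muln^~ m) e'; rewrite /= !mulnDl => e''.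
  have hN : c * N = c * d * m by rewrite -Nm mulnA mulnAC.
  have hN2 : N = d * m by rewrite -Nm mulnC.
  lia.
have kN : k <= N by apply: leq_trans km _; rewrite /m leq_div.
have e3 : c * N + (q * m + (ix + (k - 1) - iy) + (N - (k - 1)) + (qy * m + iy)) = N + (qx * m + ix) + N.
  exact: e3_arith e2 iyk kN.
rewrite -(modnMDl c) e3 /N modnDr modnDl modn_small //.
Qed.


Section BigMin.
Variables (I : eqType) (x : nat) (P : pred I) (F : I -> nat).

Lemma bigmin_le_idx (s : seq I) : \big[minn/x]_(i <- s | P i) F i <= x.
Proof.
elim: s => [|a s IH]; first by rewrite big_nil.
by rewrite big_cons; case: (P a) => //; apply: leq_trans (geq_minr _ _) IH.
Qed.

Lemma bigmin_le (s : seq I) j : j \in s -> P j -> \big[minn/x]_(i <- s | P i) F i <= F j.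
Proof.
elim: s => [|a s IH] //; rewrite inE big_cons => /orP[/eqP ->|js] Pj.
  by rewrite Pj geq_minl.
case: (P a); last exact: IH.
by apply: leq_trans (geq_minr _ _) (IH js Pj).
Qed.

Lemma bigmin_attained (s : seq I) : \big[minn/x]_(i <- s | P i) F i = x \/
  exists2 i, i \in s & P i /\ \big[minn/x]_(i <- s | P i) F i = F i.
Proof.
elim: s => [|a s IH]; first by rewrite big_nil; left.
rewrite big_cons; case Pa: (P a) => /=; last first.
  case: IH => [->|[i iS [Pi e]]]; [by left|right; exists i; [by rewrite inE iS orbT|by split]].
case: (leqP (F a) (\big[minn/x]_(i <- s | P i) F i)) => h.
  by right; exists a; rewrite ?inE ?eqxx //; split => //; apply/minn_idPl.
case: IH => [->|[i iS [Pi e]]]; [by left|right; exists i; [by rewrite inE iS orbT|by split]].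
Qed.
End BigMin.

Theorem mainTheorem2 (N : nat) (r : nat) :
  0 < N -> 1 <= r <= N ->
  rho_minus [the finZmodType of 'I_N.-1.+1] r =
  \big[minn/N]_(d <- divisors N) (d * (2 * ceil_div r d - 1)).
Proof.
move=> N0 /andP[r1 rN].
have cG : #|[the finZmodType of 'I_N.-1.+1]| = N by rewrite card_ord prednK.
apply/eqP; rewrite eqn_leq; apply/andP; split.
- case: (bigmin_attained N predT (fun d => d * (2 * ceil_div r d - 1)) (divisors N)) => [->|[d dD [_ ->]]].
    by rewrite /rho_minus cG; apply: bigmin_le_idx.
  have dN : d %| N.-1.+1 by rewrite prednK // dvdn_divisors.
  have rN' : r <= N.-1.+1 by rewrite prednK.
  have [A [cA hA]] := upper_bound r1 rN' dN.
  apply: leq_trans hA; rewrite /rho_minus.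
  by apply: bigmin_le; rewrite ?mem_index_enum ?cA.
- rewrite /rho_minus.
  case: (bigmin_attained #|[the finZmodType of 'I_N.-1.+1]| (fun A : {set 'I_N.-1.+1} => #|A| == r)
          (fun A => #|diffset A A|) (index_enum _)) => [->|[A _ [/eqP cA ->]]].
    by rewrite cG; apply: bigmin_le_idx.
  have [d dG hd] := lower_bound cA r1.
  apply: leq_trans hd; apply: bigmin_le => //.
  by rewrite -dvdn_divisors // -cG.
Qed.
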